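(* Let $H$ be a simple, co-hopfian, complete group, and let $G$ be a simple, complete group with $H\subsetneq G$ such that every proper subgroup of $G$ is either cyclic or contained in a conjugate $g^{-1}Hg$ ($g\in G$) of $H$. Then $G$ is co-hopfian and the inclusion $H\subseteq G$ is a localization.
   Context: A group homomorphism $i\colon H\to G$ is a localization if for every homomorphism $\varphi\colon H\to G$ there exists a unique homomorphism $\psi\colon G\to G$ with $\psi\circ i=\varphi$; for $H\subseteq G$, ''$H\subseteq G$ is a localization'' means the inclusion map is. A group is co-hopfian if every injective endomorphism is an automorphism; complete if it has trivial center and every automorphism is inner. *)

(* Defs.v *)
From Stdlib Require Import ZArith ProofIrrelevance.
Set Implicit Arguments.

Record group := Group {
  carrier :> Type;
  gop : carrier -> carrier -> carrier;
  gid : carrier;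
  ginv : carrier -> carrier;
  gassoc : forall x y z, gop x (gop y z) = gop (gop x y) z;
  gid_l : forall x, gop gid x = x;
  ginv_l : forall x, gop (ginv x) x = gid
}.
Arguments gop {g}. Arguments gid {g}. Arguments ginv {g}.

Definition hom {A B : group} (f : A -> B) : Prop :=
  forall x y, f (gop x y) = gop (f x) (f y).

Definition injective {A B : Type} (f : A -> B) := forall x y, f x = f y -> x = y.
Definition surjective {A B : Type} (f : A -> B) := forall y, exists x, f x = y.

Definition automorphism {A : group} (f : A -> A) : Prop :=
  hom f /\ injective f /\ surjective f.

Definition cohopfian (A : group) : Prop :=
  forall f : A -> A, hom f -> injective f -> automorphism f.

Definition trivial_center (A : group) : Prop :=
  forall z : A, (forall x : A, gop z x = gop x z) -> z = gid.

Definition inner {A : group} (f : A -> A) : Prop :=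
  exists g : A, forall x, f x = gop (ginv g) (gop x g).

Definition complete (A : group) : Prop :=
  trivial_center A /\ forall f : A -> A, automorphism f -> inner f.

Definition subgroup {A : group} (S : A -> Prop) : Prop :=
  S gid /\ (forall x y, S x -> S y -> S (gop x y)) /\ (forall x, S x -> S (ginv x)).

Definition normal {A : group} (N : A -> Prop) : Prop :=
  subgroup N /\ forall g x, N x -> N (gop (ginv g) (gop x g)).

Definition simple (A : group) : Prop :=
  (exists x : A, x <> gid) /\
  forall N : A -> Prop, normal N ->
    (forall x, N x -> x = gid) \/ (forall x, N x).

Fixpoint npow {A : group} (g : A) (n : nat) : A :=
  match n with O => gid | S k => gop g (npow g k) end.

Definition zpow {A : group} (g : A) (n : Z) : A :=
  match n with
  | Z0 => gid
  | Zpos p => npow g (Pos.to_nat p)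
  | Zneg p => ginv (npow g (Pos.to_nat p))
  end.

Definition cyclic {A : group} (S : A -> Prop) : Prop :=
  exists g : A, forall x, S x <-> exists n : Z, x = zpow g n.

Definition localization {A B : group} (i : A -> B) : Prop :=
  forall phi : A -> B, hom phi ->
    exists psi : B -> B, hom psi /\ (forall a, psi (i a) = phi a) /\
      forall psi' : B -> B, hom psi' -> (forall a, psi' (i a) = phi a) ->
        forall x, psi' x = psi x.

Section Sub.
Variables (A : group) (S : A -> Prop) (HS : subgroup S).

Definition sub_op (x y : {a : A | S a}) : {a : A | S a} :=
  exist _ (gop (proj1_sig x) (proj1_sig y))
    (proj1 (proj2 HS) _ _ (proj2_sig x) (proj2_sig y)).
Definition sub_id : {a : A | S a} := exist _ gid (proj1 HS).
Definition sub_inv (x : {a : A | S a}) : {a : A | S a} :=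
  exist _ (ginv (proj1_sig x)) (proj2 (proj2 HS) _ (proj2_sig x)).

Lemma sub_eq (x y : {a : A | S a}) : proj1_sig x = proj1_sig y -> x = y.
Proof.
  destruct x as [x hx], y as [y hy]; simpl; intros ->.
  f_equal; apply proof_irrelevance.
Qed.

Lemma sub_assoc x y z : sub_op x (sub_op y z) = sub_op (sub_op x y) z.
Proof. apply sub_eq; simpl; apply gassoc. Qed.
Lemma sub_id_l x : sub_op sub_id x = x.
Proof. apply sub_eq; simpl; apply gid_l. Qed.
Lemma sub_inv_l x : sub_op (sub_inv x) x = sub_id.
Proof. apply sub_eq; simpl; apply ginv_l. Qed.

Definition sub_group : group :=
  @Group {a : A | S a} sub_op sub_id sub_inv sub_assoc sub_id_l sub_inv_l.

Definition incl : sub_group -> A := fun x => proj1_sig x.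
End Sub.

(* Main.v *)
Require Import Defs.
From Stdlib Require Import ZArith Classical ClassicalEpsilon.

Arguments gassoc {g} x y z.
Arguments gid_l {g} x.
Arguments ginv_l {g} x.

Section Gen.
Variable A : group.
Implicit Types x y z a b : A.

Lemma ginv_r x : gop x (ginv x) = gid.
Proof.
  rewrite <- (gid_l (gop x (ginv x))).
  rewrite <- (ginv_l (ginv x)) at 1.
  rewrite <- gassoc. rewrite (gassoc (ginv x) x (ginv x)).
  rewrite ginv_l, gid_l. apply ginv_l.
Qed.

Lemma gid_r x : gop x gid = x.
Proof. rewrite <- (ginv_l x), gassoc, ginv_r, gid_l. reflexivity. Qed.

Lemma cancel_l a x y : gop a x = gop a y -> x = y.
Proof.
  intro E. rewrite <- (gid_l x), <- (gid_l y), <- (ginv_l a), <- !gassoc, E. reflexivity.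
Qed.

Lemma inv_uniq a x : gop a x = gid -> a = ginv x.
Proof.
  intro E. rewrite <- (gid_r a), <- (ginv_r x), gassoc, E, gid_l. reflexivity.
Qed.

Lemma ginv_op x y : ginv (gop x y) = gop (ginv y) (ginv x).
Proof.
  symmetry. apply inv_uniq. rewrite <- gassoc, (gassoc (ginv x)), ginv_l, gid_l, ginv_l.
  reflexivity.
Qed.

Lemma ginv_gid : ginv (@gid A) = gid.
Proof. symmetry. apply inv_uniq. apply gid_l. Qed.

Lemma ginv_ginv x : ginv (ginv x) = x.
Proof. symmetry. apply inv_uniq. apply ginv_r. Qed.

Lemma comm_inv y (c : A) : gop y c = gop c y -> gop (ginv y) c = gop c (ginv y).
Proof.
  intro E.
  rewrite <- (gid_r (gop (ginv y) c)), <- (ginv_r y), !gassoc.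
  rewrite <- (gassoc (ginv y) c y), <- E, gassoc, ginv_l, gid_l. reflexivity.
Qed.

Lemma comm_npow y (c : A) n : gop y c = gop c y -> gop y (npow c n) = gop (npow c n) y.
Proof.
  intro E. induction n; simpl.
  - rewrite gid_l, gid_r. reflexivity.
  - rewrite gassoc, E, <- gassoc, IHn, gassoc. reflexivity.
Qed.

Lemma comm_zpow y (c : A) n : gop y c = gop c y -> gop y (zpow c n) = gop (zpow c n) y.
Proof.
  intro E. destruct n; simpl.
  - rewrite gid_l, gid_r. reflexivity.
  - apply comm_npow; auto.
  - symmetry. apply comm_inv. symmetry. apply comm_npow; auto.
Qed.

Lemma zpow_comm (c : A) m n : gop (zpow c m) (zpow c n) = gop (zpow c n) (zpow c m).
Proof.
  apply comm_zpow. symmetry. apply comm_zpow. reflexivity.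
Qed.

Lemma cyclic_comm (K : A -> Prop) : cyclic K -> forall x y, K x -> K y -> gop x y = gop y x.
Proof.
  intros [c Hc] x y Kx Ky. apply Hc in Kx as [m ->]. apply Hc in Ky as [n ->].
  apply zpow_comm.
Qed.

Lemma abelian_contra : trivial_center A -> (exists x : A, x <> gid) ->
  ~ (forall x y : A, gop x y = gop y x).
Proof.
  intros tc [x nx] ab. apply nx, tc. intro; apply ab.
Qed.
End Gen.
Arguments ginv_r {A}.
Arguments gid_r {A}.
Arguments cancel_l {A}.
Arguments inv_uniq {A}.
Arguments ginv_op {A}.
Arguments ginv_gid {A}.
Arguments ginv_ginv {A}.
Arguments comm_inv {A}.
Arguments comm_npow {A}.
Arguments comm_zpow {A}.
Arguments zpow_comm {A}.
Arguments cyclic_comm {A}.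
Arguments abelian_contra {A}.

Section Hom.
Variables A B : group.
Variable f : A -> B.
Hypothesis hf : hom f.

Lemma hom_id : f gid = gid.
Proof.
  apply (cancel_l (f gid)). rewrite <- hf, gid_l, gid_r. reflexivity.
Qed.

Lemma hom_inv x : f (ginv x) = ginv (f x).
Proof. apply inv_uniq. rewrite <- hf, ginv_l. apply hom_id. Qed.

Lemma hom_inj_ker : (forall x, f x = gid -> x = gid) -> injective f.
Proof.
  intros K x y E. assert (gop x (ginv y) = gid).
  { apply K. rewrite hf, hom_inv, E. apply ginv_r. }
  apply inv_uniq in H. rewrite H. apply ginv_ginv.
Qed.

Lemma ker_normal : normal (fun x => f x = gid).
Proof.
  split; [split; [|split]|].
  - apply hom_id.
  - intros x y Ex Ey. rewrite hf, Ex, Ey. apply gid_l.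
  - intros x Ex. rewrite hom_inv, Ex. apply ginv_gid.
  - intros g x Ex. rewrite !hf, Ex, gid_l, hom_inv. apply ginv_l.
Qed.

Lemma hom_simple : simple A -> (forall x, f x = gid) \/ injective f.
Proof.
  intros [_ S]. destruct (S _ ker_normal) as [T|T]; [right; apply hom_inj_ker; auto | left; auto].
Qed.

Lemma image_subgroup : subgroup (fun y => exists x, f x = y).
Proof.
  split; [|split].
  - exists gid; apply hom_id.
  - intros ? ? [a <-] [b <-]. exists (gop a b). apply hf.
  - intros ? [a <-]. exists (ginv a). apply hom_inv.
Qed.

Lemma inj_abelian : injective f -> (forall x y : B, gop x y = gop y x) ->
  forall x y : A, gop x y = gop y x.
Proof. intros I ab x y. apply I. rewrite !hf. apply ab. Qed.
End Hom.
Arguments hom_id {A B f}.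
Arguments hom_inv {A B f}.
Arguments hom_inj_ker {A B f}.
Arguments ker_normal {A B f}.
Arguments hom_simple {A B f}.
Arguments image_subgroup {A B f}.
Arguments inj_abelian {A B f}.

Lemma conj_hom (A : group) (a : A) : hom (fun x => gop (ginv a) (gop x a)).
Proof.
  intros x y. rewrite <- !gassoc. f_equal. rewrite (gassoc a (ginv a)), ginv_r, gid_l, gassoc.
  reflexivity.
Qed.

Arguments conj_hom {A}.
Lemma conj2_hom (A : group) (g : A) : hom (fun x => gop g (gop x (ginv g))).
Proof.
  pose proof (conj_hom (ginv g)) as C. rewrite ginv_ginv in C. exact C.
Qed.

Lemma conj_cancel (A : group) (g h : A) : gop g (gop (gop (ginv g) (gop h g)) (ginv g)) = h.
Proof.
  rewrite !gassoc, ginv_r, gid_l, <- gassoc, ginv_r. apply gid_r.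
Qed.

Lemma conj_solve (A : group) (g y h : A) : gop g (gop y (ginv g)) = h -> y = gop (ginv g) (gop h g).
Proof.
  intros <-. rewrite !gassoc, ginv_l, gid_l, <- gassoc, ginv_l. symmetry; apply gid_r.
Qed.

Section Main.
Variables (G : group) (H : G -> Prop) (HH : subgroup H).
Hypotheses (sH : simple (sub_group HH)) (cH : cohopfian (sub_group HH))
  (compH : complete (sub_group HH)) (sG : simple G) (compG : complete G)
  (prop : exists g : G, ~ H g)
  (hyp : forall K : G -> Prop, subgroup K -> (exists g : G, ~ K g) ->
     cyclic K \/
     exists g : G, forall x, K x -> exists h, H h /\ x = gop (ginv g) (gop h g)).

Lemma conj_into (g : G) (f : sub_group HH -> G) : hom f -> injective f ->
  (forall x, exists h, H h /\ f x = gop (ginv g) (gop h g)) ->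
  exists j : sub_group HH -> sub_group HH, hom j /\ injective j /\
    forall x, @incl _ _ HH (j x) = gop g (gop (f x) (ginv g)).
Proof.
  intros hf fi hin.
  assert (mem : forall x, H (gop g (gop (f x) (ginv g)))).
  { intro x. destruct (hin x) as [h [Hh E]]. rewrite E, conj_cancel. exact Hh. }
  exists (fun x => exist _ _ (mem x)). split; [|split].
  - intros x y. apply sub_eq. simpl. change (f (sub_op HH x y)) with (f (gop x y)). rewrite hf. apply conj2_hom.
  - intros x y E. apply fi. apply (f_equal (@proj1_sig _ _)) in E. simpl in E.
    apply cancel_l in E. rewrite <- (gid_r (f x)), <- (gid_r (f y)), <- (ginv_l g), !gassoc, E.
    reflexivity.
  - intro; reflexivity.
Qed.

Lemma conj_surj (g : G) (f : sub_group HH -> G) : hom f -> injective f ->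
  (forall x, exists h, H h /\ f x = gop (ginv g) (gop h g)) ->
  forall h, H h -> exists x, f x = gop (ginv g) (gop h g).
Proof.
  intros hf fi hin h Hh. destruct (conj_into g f hf fi hin) as [j [hj [ij ej]]].
  destruct (cH j hj ij) as [_ [_ sj]]. destruct (sj (exist _ h Hh)) as [x Ex].
  exists x. apply conj_solve. rewrite <- ej, Ex. reflexivity.
Qed.

Lemma sub_ab_false : ~ forall x y : sub_group HH, gop x y = gop y x.
Proof. apply abelian_contra. apply compH. apply sH. Qed.

Lemma G_ab_false : ~ forall x y : G, gop x y = gop y x.
Proof. apply abelian_contra. apply compG. apply sG. Qed.

Lemma H_nontriv : exists h, H h /\ h <> gid.
Proof.
  destruct sH as [[x nx] _]. exists (proj1_sig x). split; [apply proj2_sig|].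
  intro E. apply nx. apply sub_eq. exact E.
Qed.

Lemma incl_hom : hom (@incl _ _ HH).
Proof. intros x y; reflexivity. Qed.

Lemma part1 : cohopfian G.
Proof.
  intros f hf fi. split; [exact hf | split; [exact fi|]].
  intro y. apply NNPP; intro ny.
  destruct (hyp _ (image_subgroup hf) (ex_intro _ y ny)) as [cy | [g Hg]].
  - apply G_ab_false. intros a b. apply fi. rewrite !hf.
    apply (cyclic_comm _ cy); eexists; reflexivity.
  - destruct prop as [g0 ng0].
    assert (hf' : hom (fun x => f (@incl _ _ HH x))).
    { intros a b. apply hf. }
    assert (fi' : injective (fun x => f (@incl _ _ HH x))).
    { intros a b E. apply sub_eq. apply fi. exact E. }
    destruct (Hg (f g0) (ex_intro _ g0 eq_refl)) as [h [Hh E0]].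
    destruct (conj_surj g _ hf' fi' (fun x => Hg _ (ex_intro _ _ eq_refl)) h Hh) as [x Ex].
    rewrite <- E0 in Ex. apply fi in Ex. apply ng0. rewrite <- Ex. exact (proj2_sig x).
Qed.

Lemma fix_H (chi : G -> G) : hom chi -> (forall h, H h -> chi h = h) -> forall y, chi y = y.
Proof.
  intros hc fc.
  destruct (hom_simple hc sG) as [T | I].
  - exfalso. destruct H_nontriv as [h [Hh nh]]. apply nh. rewrite <- (fc h Hh). apply T.
  - pose proof (part1 chi hc I) as ac.
    destruct (proj2 compG chi ac) as [b Eb].
    assert (Hb : forall h, H h -> gop h b = gop b h).
    { intros h Hh. pose proof (Eb h) as E. rewrite fc in E by exact Hh.
      assert (E2 : gop b (gop (ginv b) (gop h b)) = gop b h) by (rewrite <- E; reflexivity).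
      rewrite gassoc, ginv_r, gid_l in E2. exact E2. }
    assert (b = gid).
    { apply NNPP; intro nb.
      assert (sC : subgroup (fun y => gop y b = gop b y)).
      { split; [|split].
        - rewrite gid_l, gid_r; reflexivity.
        - intros x y Ex Ey. rewrite <- gassoc, Ey, gassoc, Ex, gassoc. reflexivity.
        - intros x Ex. apply comm_inv. exact Ex. }
      assert (pC : exists g, ~ (gop g b = gop b g)).
      { apply NNPP; intro N. apply nb. apply (proj1 compG). intro x.
        apply NNPP; intro N2. apply N. exists x. intro E; apply N2; symmetry; exact E. }
      destruct (hyp _ sC pC) as [cy | [g Hg]].
      - apply sub_ab_false. intros x y. apply sub_eq. simpl.
        apply (cyclic_comm _ cy); apply Hb; apply proj2_sig.
      - assert (fi : injective (@incl _ _ HH)) by (intros x y E; apply sub_eq; exact E).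
        destruct (Hg b eq_refl) as [h [Hh Eh]].
        destruct (conj_surj g _ incl_hom fi (fun x => Hg _ (Hb _ (proj2_sig x))) h Hh) as [x Ex].
        rewrite <- Eh in Ex.
        assert (Hbb : H b) by (rewrite <- Ex; exact (proj2_sig x)).
        apply nb. refine (f_equal (@proj1_sig _ _) (proj1 compH (exist _ b Hbb) _)).
        intro z. apply sub_eq. simpl. symmetry. apply Hb. apply proj2_sig. }
    intro y. rewrite Eb, H0, ginv_gid, gid_l. apply gid_r.
Qed.

Lemma part2 : localization (@incl G H HH).
Proof.
  intros phi hphi.
  destruct (hom_simple hphi sH) as [T | I].
  - exists (fun _ => gid). split; [|split].
    + intros x y. symmetry. apply gid_l.
    + intro a. symmetry. apply T.
    + intros psi' hp' ext x. destruct (hom_simple hp' sG) as [T' | I']; [apply T'|].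
      exfalso. destruct H_nontriv as [h [Hh nh]]. apply nh. apply I'.
      rewrite (hom_id hp'). pose proof (ext (exist _ h Hh)) as E. simpl in E.
      unfold incl in E; simpl in E. rewrite E. apply T.
  - destruct (classic (forall y, exists x, phi x = y)) as [S | NS].
    + exfalso.
      set (pinv := fun y => proj1_sig (constructive_indefinite_description _ (S y))).
      assert (Ep : forall y, phi (pinv y) = y).
      { intro y. unfold pinv. apply proj2_sig. }
      assert (hf : hom (fun y => @incl _ _ HH (pinv y))).
      { intros x y. change (@incl _ _ HH (pinv (gop x y)) = @incl _ _ HH (gop (pinv x) (pinv y))).
        f_equal. apply I. rewrite hphi, !Ep. reflexivity. }
      assert (fi : injective (fun y => @incl _ _ HH (pinv y))).
      { intros x y E. apply sub_eq in E. rewrite <- (Ep x), <- (Ep y), E. reflexivity. }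
      destruct (part1 _ hf fi) as [_ [_ sf]]. destruct prop as [g0 ng0].
      destruct (sf g0) as [x Ex]. apply ng0. rewrite <- Ex. exact (proj2_sig (pinv x)).
    + apply not_all_ex_not in NS.
      destruct (hyp _ (image_subgroup hphi) NS) as [cy | [g Hg]].
      * exfalso. apply sub_ab_false. intros a b. apply I. rewrite !hphi.
        apply (cyclic_comm _ cy); eexists; reflexivity.
      * destruct (conj_into g phi hphi I (fun x => Hg _ (ex_intro _ x eq_refl))) as [j [hj [ij ej]]].
        destruct (proj2 compH j (cH j hj ij)) as [k Ek].
        assert (Ephi : forall x, phi x = gop (ginv g) (gop (gop (ginv (proj1_sig k))
                          (gop (proj1_sig x) (proj1_sig k))) g)).
        { intro x. apply conj_solve. rewrite <- ej, Ek. reflexivity. }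
        set (a := gop (proj1_sig k) g).
        exists (fun y => gop (ginv a) (gop y a)). split; [|split].
        -- apply conj_hom.
        -- intro x. rewrite Ephi. unfold a, incl. rewrite ginv_op, !gassoc. reflexivity.
        -- intros psi' hp' ext x.
           assert (hc : hom (fun y => gop a (gop (psi' y) (ginv a)))).
           { intros u v. rewrite hp'. apply conj2_hom. }
           pose proof (fix_H _ hc) as F.
           assert (F2 : forall y, gop a (gop (psi' y) (ginv a)) = y).
           { apply F. intros h Hh. pose proof (ext (exist _ h Hh)) as E.
             unfold incl in E; simpl in E. rewrite E, Ephi. simpl. unfold a.
             rewrite ginv_op, !gassoc.
             rewrite <- (gassoc (proj1_sig k) g (ginv g)), ginv_r, gid_r, ginv_r, gid_l.
             rewrite <- (gassoc (gop h (proj1_sig k)) g (ginv g)), ginv_r, gid_r.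
             rewrite <- gassoc, ginv_r. apply gid_r. }
           apply conj_solve. apply F2.
Qed.
End Main.

Theorem theorem5p4 (G : group) (H : G -> Prop) (HH : subgroup H) :
  simple (sub_group HH) -> cohopfian (sub_group HH) -> complete (sub_group HH) ->
  simple G -> complete G ->
  (exists g : G, ~ H g) ->
  (forall K : G -> Prop, subgroup K -> (exists g : G, ~ K g) ->
     cyclic K \/
     exists g : G, forall x, K x -> exists h, H h /\ x = gop (ginv g) (gop h g)) ->
  cohopfian G /\ localization (@incl G H HH).
Proof.
  intros. split; [eapply part1 | eapply part2]; eauto.
Qed.
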